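(* Let $I\ge1$, let $u_0,\dots,u_{I-1}\ge 0$, $c_0,\dots,c_{I-1}\ge0$, $u_I,c_I\in\mathbb R$, $k_0,\dots,k_{I-1}>0$, and let $(S_I(t))_{t\ge0}$ be an arbitrary real-valued process. Set $X_I(t)=u_I+c_It-S_I(t)$, $L_I(t)=-\min(\inf_{s\le t}X_I(s),0)$, and recursively for $i=I-1,I-2,\dots,0$: $$Y_i(t)=u_i+c_it-k_iL_{i+1}(t),\qquad L_i(t)=-\min\Big(\inf_{s\le t}Y_i(s),0\Big)\ (i\ge1).$$ Let $\tau_0=\inf\{t\ge0:Y_0(t)<0\}$. Define $$U=\sum_{i=0}^{I}\frac{u_i}{k_i k_{i+1}\cdots k_{I-1}},\qquad C=\sum_{i=0}^{I}\frac{c_i}{k_ik_{i+1}\cdots k_{I-1}}$$ (the empty product for $i=I$ being $1$). Then $\tau_0=\inf\{t\ge0: U+Ct-S_I(t)<0\}$ pathwise; consequently for all $t>0$, $$P(\tau_0<t)=\Psi_I\Big(t;\ \tfrac{u_0}{k_0\cdots k_{I-1}}+\tfrac{u_1}{k_1\cdots k_{I-1}}+\dots+u_I,\ \tfrac{c_0}{k_0\cdots k_{I-1}}+\tfrac{c_1}{k_1\cdots k_{I-1}}+\dots+c_I\Big),$$ where $\Psi_I(t;u,c)=P(\inf\{s\ge0:u+cs-S_I(s)<0\}<t)$ is the finite-time ruin probability of the last subsidiary in the chain with initial reserve $u$ and premium rate $c$.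
   Context: Linear (hierarchical) chain of central branches $X_0,\dots,X_{I-1}$, each a deterministic drift $u_i+c_it$ in isolation; branch $i$ bails out branch $i+1$ by minimal regulation, paying proportional cost $k_i$ per unit of bail-out. $Y_i$ is the (unregulated) reserve of branch $i$ after its bail-out payments, $L_i$ its bail-out regulator, and the ruin of the network is the ruin time $\tau_0$ of the top branch $X_0$. *)

(* Defs.v *)
From Stdlib Require Import Reals Lra ClassicalEpsilon.
Open Scope R_scope.

(** Extended reals [-oo, +oo], needed because running infima of an arbitrary
    (possibly locally unbounded) path may be -oo, and hitting times of
    never-attained sets are +oo. *)
Inductive ER : Type := Fin (r : R) | PInf | NInf.

Definition Eneg (e : ER) : ER :=
  match e with Fin r => Fin (- r) | PInf => NInf | NInf => PInf end.

Definition Emin (a b : ER) : ER :=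
  match a, b with
  | NInf, _ => NInf
  | _, NInf => NInf
  | PInf, b => b
  | a, PInf => a
  | Fin x, Fin y => Fin (Rmin x y)
  end.

Definition Esup (P : ER -> Prop) : ER :=
  match excluded_middle_informative (P PInf) with
  | left _ => PInf
  | right _ =>
    match excluded_middle_informative (exists r, P (Fin r)) with
    | right _ => NInf
    | left ne =>
      match excluded_middle_informative (bound (fun r => P (Fin r))) with
      | left b => Fin (proj1_sig (completeness (fun r => P (Fin r)) b ne))
      | right _ => PInf
      end
    end
  end.

Definition Einf (P : ER -> Prop) : ER := Eneg (Esup (fun e => P (Eneg e))).

Definition Eltr (e : ER) (r : R) : Prop :=
  match e with Fin x => x < r | NInf => True | PInf => False end.

Definition Eneg_strict (e : ER) : Prop := Eltr e 0.

Definition regulator (Y : R -> ER) (t : R) : ER :=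
  Eneg (Emin (Einf (fun e => exists s, 0 <= s <= t /\ e = Y s)) (Fin 0)).

Definition Esubk (a k : R) (L : ER) : ER :=
  match L with Fin l => Fin (a - k * l) | PInf => NInf | NInf => PInf end.

(** The chain, indexed downward: [Ydown I u c k SI n] is Y_{I-n}
    (with Y_I := X_I = u_I + c_I t - S_I(t)), and
    Y_{i}(t) = u_i + c_i t - k_i L_{i+1}(t), L_{i+1} = regulator Y_{i+1}. *)
Fixpoint Ydown (I : nat) (u c k : nat -> R) (SI : R -> R) (n : nat) : R -> ER :=
  match n with
  | O => fun t => Fin (u I + c I * t - SI t)
  | S n' => fun t =>
      Esubk (u (I - n)%nat + c (I - n)%nat * t) (k (I - n)%nat)
            (regulator (Ydown I u c k SI n') t)
  end.

Definition Ychain (I : nat) (u c k : nat -> R) (SI : R -> R) (i : nat) : R -> ER :=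
  Ydown I u c k SI (I - i).

Definition ruin_time (Y : R -> ER) : ER :=
  Einf (fun e => exists t, e = Fin t /\ 0 <= t /\ Eneg_strict (Y t)).

Definition ruin_time_R (f : R -> R) : ER := ruin_time (fun t => Fin (f t)).

Fixpoint prod_range (k : nat -> R) (i n : nat) : R :=
  match n with
  | O => 1
  | S n' => k i * prod_range k (S i) n'
  end.

Definition weighted_sum (I : nat) (a k : nat -> R) : R :=
  sum_f_R0 (fun i => a i / prod_range k i (I - i)) I.

(* Main.v *)
Require Import Defs.
From Stdlib Require Import Reals.
From Stdlib Require Import Lra Lia Classical ClassicalEpsilon FunctionalExtensionality.
Open Scope R_scope.

Definition Egtr (e : ER) (x : R) : Prop :=
  match e with Fin l => x < l | PInf => True | NInf => False end.

Lemma Esup_gt (Q : ER -> Prop) z : Egtr (Esup Q) z <-> exists e, Q e /\ Egtr e z.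
Proof.
  unfold Esup.
  destruct (excluded_middle_informative (Q PInf)) as [h|h].
  - simpl; split; [intros _; exists PInf; simpl; auto | auto].
  - destruct (excluded_middle_informative (exists r, Q (Fin r))) as [ne|ne].
    + destruct (excluded_middle_informative (bound (fun r => Q (Fin r)))) as [b|b].
      * destruct (completeness (fun r => Q (Fin r)) b ne) as [l [Hub Hl]]. simpl.
        split.
        -- intro hz. apply NNPP; intro hn.
           assert (Hz : is_upper_bound (fun r => Q (Fin r)) z).
           { intros r hr. destruct (Rle_dec r z); auto. exfalso; apply hn.
             exists (Fin r); split; auto; simpl; lra. }
           specialize (Hl z Hz). lra.
        -- intros [e [he hg]]. destruct e as [r| |]; simpl in hg.
           ++ apply Hub in he. lra.
           ++ contradiction.
           ++ contradiction.
      * simpl. split; auto. intros _. apply NNPP; intro hn. apply b.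
        exists z. intros r hr. destruct (Rle_dec r z); auto. exfalso; apply hn.
        exists (Fin r); simpl; split; auto; lra.
    + simpl. split; [tauto|]. intros [e [he hg]].
      destruct e as [r| |]; simpl in hg.
      * apply ne; eauto.
      * apply h; auto.
      * contradiction.
Qed.

Lemma Egtr_Eneg E y : Egtr E (- y) <-> Eltr (Eneg E) y.
Proof. destruct E; simpl; split; intros; auto; lra. Qed.

Lemma Eneg_inv e : Eneg (Eneg e) = e.
Proof. destruct e; simpl; auto. now rewrite Ropp_involutive. Qed.

Lemma Einf_lt (P : ER -> Prop) y : Eltr (Einf P) y <-> exists e, P e /\ Eltr e y.
Proof.
  unfold Einf. rewrite <- Egtr_Eneg, Esup_gt. split.
  - intros [e [he hg]]. exists (Eneg e). split; auto. now apply Egtr_Eneg.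
  - intros [e [he hg]]. exists (Eneg e). rewrite Eneg_inv. split; auto.
    apply Egtr_Eneg. now rewrite Eneg_inv.
Qed.

Lemma Eltr_ext E1 E2 : (forall y, Eltr E1 y <-> Eltr E2 y) -> E1 = E2.
Proof.
  intro H. destruct E1 as [x| |], E2 as [z| |].
  - destruct (Rtotal_order x z) as [h|[h|h]].
    + destruct (H z) as [H1 _]; simpl in H1; specialize (H1 h); lra.
    + now subst.
    + destruct (H x) as [_ H2]; simpl in H2; specialize (H2 h); lra.
  - destruct (H (x+1)) as [H1 _]; simpl in H1; exfalso; apply H1; lra.
  - destruct (H x) as [_ H2]; simpl in H2; exfalso; specialize (H2 Logic.I); lra.
  - destruct (H (z+1)) as [_ H2]; simpl in H2; exfalso; apply H2; lra.
  - reflexivity.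
  - destruct (H 0) as [_ H2]; simpl in H2; exfalso; apply H2; exact Logic.I.
  - destruct (H z) as [H1 _]; simpl in H1; specialize (H1 Logic.I); lra.
  - destruct (H 0) as [H1 _]; simpl in H1; exfalso; apply H1; exact Logic.I.
  - reflexivity.
Qed.

Definition Equiv (S1 S2 : R -> Prop) :=
  forall y, (exists t, S1 t /\ t < y) <-> (exists t, S2 t /\ t < y).

Lemma Equiv_ext (S1 S2 : R -> Prop) : (forall t, S1 t <-> S2 t) -> Equiv S1 S2.
Proof.
  intros H y; split; intros [t [h1 h2]]; exists t; split; auto; apply H; auto.
Qed.

Lemma Equiv_trans S1 S2 S3 : Equiv S1 S2 -> Equiv S2 S3 -> Equiv S1 S3.
Proof. intros H1 H2 y. specialize (H1 y); specialize (H2 y); tauto. Qed.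

Lemma Einf_eq (S1 S2 : R -> Prop) : Equiv S1 S2 ->
  Einf (fun e => exists t, e = Fin t /\ S1 t) = Einf (fun e => exists t, e = Fin t /\ S2 t).
Proof.
  intro H. apply Eltr_ext. intro y. rewrite !Einf_lt. split.
  - intros [e [[t [-> h]] hl]]. simpl in hl.
    destruct (proj1 (H y) (ex_intro _ t (conj h hl))) as [t' [h' hl']].
    exists (Fin t'); split; [exists t'; auto | simpl; auto].
  - intros [e [[t [-> h]] hl]]. simpl in hl.
    destruct (proj2 (H y) (ex_intro _ t (conj h hl))) as [t' [h' hl']].
    exists (Fin t'); split; [exists t'; auto | simpl; auto].
Qed.

Lemma Esubk_lt A K L r : 0 < K ->
  (Eltr (Esubk A K L) r <-> Egtr L ((A - r) / K)).
Proof.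
  intro HK. destruct L as [l| |]; simpl; try tauto.
  assert (Hq : A - r = K * ((A - r) / K)) by (field; lra).
  set (q := (A - r) / K) in *. split; intro; nra.
Qed.

Lemma reg_char Y t x : 0 <= x ->
  (Egtr (regulator Y t) x <-> exists s, 0 <= s <= t /\ Eltr (Y s) (- x)).
Proof.
  intro Hx. unfold regulator.
  rewrite <- (Ropp_involutive x) at 1. rewrite Egtr_Eneg, Eneg_inv.
  assert (HM : forall E, Eltr (Emin E (Fin 0)) (- x) <-> Eltr E (- x)).
  { intros [z| |]; simpl; try tauto.
    - unfold Rmin; destruct (Rle_dec z 0); split; intro; lra.
    - split; intro; lra. }
  rewrite HM, Einf_lt. split.
  - intros [e [[s [hs ->]] hl]]. eauto.
  - intros [s [hs hl]]. exists (Y s); split; eauto.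
Qed.

Lemma Eltr_mono e r r' : Eltr e r -> r <= r' -> Eltr e r'.
Proof. destruct e; simpl; auto; lra. Qed.

Lemma Rdiv_le_0_compat a b : 0 <= a -> 0 < b -> 0 <= a / b.
Proof. intros. unfold Rdiv. apply Rmult_le_pos; auto. left; apply Rinv_0_lt_compat; auto. Qed.

Fixpoint psum (f : nat -> R) (n : nat) : R :=
  match n with O => 0 | S m => psum f m + f m end.

Lemma sum_psum f n : sum_f_R0 f n = psum f (S n).
Proof. induction n; simpl; [lra|]. rewrite IHn. simpl. reflexivity. Qed.

Section Chain.
Variables (I : nat) (u c k : nat -> R).
Hypothesis Hu : forall i, (i < I)%nat -> 0 <= u i.
Hypothesis Hc : forall i, (i < I)%nat -> 0 <= c i.
Hypothesis Hk : forall i, (i < I)%nat -> 0 < k i.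
Variable SI : R -> R.

Definition P i := prod_range k i (I - i).
Definition T (g : nat -> R) i :=
  psum (fun j => g j / P j) (S I) - psum (fun j => g j / P j) i.

Lemma prod_pos : forall n j, (j + n <= I)%nat -> 0 < prod_range k j n.
Proof.
  induction n; intros j H; simpl; [lra|].
  apply Rmult_lt_0_compat; [apply Hk; lia | apply IHn; lia].
Qed.

Lemma P_step i : (i < I)%nat -> P i = k i * P (S i).
Proof.
  intro H. unfold P. replace (I - i)%nat with (S (I - S i)) by lia. reflexivity.
Qed.

Lemma T_step g i : T g i = g i / P i + T g (S i).
Proof. unfold T. change (psum (fun j => g j / P j) (S i)) with (psum (fun j => g j / P j) i + g i / P i). ring. Qed.

Lemma Ychain_step i : (i < I)%nat -> forall t,
  Ychain I u c k SI i t = Esubk (u i + c i * t) (k i) (regulator (Ychain I u c k SI (S i)) t).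
Proof.
  intros Hi t. unfold Ychain. replace (I - i)%nat with (S (I - S i)) by lia.
  cbn [Ydown]. replace (I - S (I - S i))%nat with i by lia. reflexivity.
Qed.

Lemma chain_equiv : forall n i, (i + n = I)%nat -> forall a b, 0 <= a -> 0 <= b ->
  Equiv (fun t => 0 <= t /\ Eltr (Ychain I u c k SI i t) (- (a + b * t)))
        (fun t => 0 <= t /\ a / P i + T u i + (b / P i + T c i) * t - SI t < 0).
Proof.
  induction n; intros i Hi a b Ha Hb.
  - replace i with I by lia. apply Equiv_ext. intro t.
    unfold Ychain. rewrite Nat.sub_diag. cbn [Ydown]. simpl Eltr.
    unfold T. cbn [psum]. unfold P. rewrite Nat.sub_diag. cbn [prod_range].
    unfold Rdiv. rewrite Rinv_1, !Rmult_1_r. split; intros [h1 h2]; split; auto; lra.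
  - assert (Hi' : (i < I)%nat) by lia.
    assert (Hki := Hk i Hi').
    assert (HP1 : 0 < P (S i)) by (unfold P; apply prod_pos; lia).
    set (a' := (u i + a) / k i). set (b' := (c i + b) / k i).
    assert (Ha' : 0 <= a') by (unfold a'; apply Rdiv_le_0_compat; [specialize (Hu i Hi'); lra | lra]).
    assert (Hb' : 0 <= b') by (unfold b'; apply Rdiv_le_0_compat; [specialize (Hc i Hi'); lra | lra]).
    specialize (IHn (S i) ltac:(lia) a' b' Ha' Hb').
    eapply Equiv_trans; [| eapply Equiv_trans; [exact IHn|]].
    +
      eapply Equiv_trans.
      * apply Equiv_ext with (S2 := fun t => 0 <= t /\ exists s, 0 <= s <= t /\
            Eltr (Ychain I u c k SI (S i) s) (- (a' + b' * t))).
        intro t. rewrite Ychain_step by auto. split.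
        -- intros [h1 h2]. split; auto.
           apply Esubk_lt in h2; auto. apply reg_char in h2.
           ++ destruct h2 as [s [hs hl]]. exists s; split; auto.
              eapply Eltr_mono; [exact hl|]. unfold a', b'. right. field. lra.
           ++ apply Rdiv_le_0_compat; auto.
              specialize (Hu i Hi'); specialize (Hc i Hi'). nra.
        -- intros [h1 [s [hs hl]]]. split; auto.
           apply Esubk_lt; auto. apply reg_char.
           ++ apply Rdiv_le_0_compat; auto.
              specialize (Hu i Hi'); specialize (Hc i Hi'). nra.
           ++ exists s; split; auto.
              eapply Eltr_mono; [exact hl|]. unfold a', b'. right. field. lra.
      * intro y. split.
        -- intros [t [[h0 [s [hs hl]]] hty]]. exists s. split; [split|]; try lra.
           eapply Eltr_mono; [exact hl|]. nra.
        -- intros [s [[h0 hl] hsy]]. exists s. split; auto. split; auto.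
           exists s; split; auto; lra.
    + apply Equiv_ext. intro t.
      assert (E1 : a' / P (S i) + T u (S i) = a / P i + T u i).
      { rewrite (T_step u i), (P_step i Hi'). unfold a'. field. lra. }
      assert (E2 : b' / P (S i) + T c (S i) = b / P i + T c i).
      { rewrite (T_step c i), (P_step i Hi'). unfold b'. field. lra. }
      rewrite E1, E2. tauto.
Qed.

End Chain.

Theorem mainTheorem3
  (I : nat) (u c k : nat -> R)
  (HI : (1 <= I)%nat)
  (Hu : forall i, (i < I)%nat -> 0 <= u i)
  (Hc : forall i, (i < I)%nat -> 0 <= c i)
  (Hk : forall i, (i < I)%nat -> 0 < k i)
  (Omega : Type) (SI : Omega -> R -> R)
  (Prob : (Omega -> Prop) -> R) :
  (forall w : Omega,
     ruin_time (Ychain I u c k (SI w) 0) =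
     ruin_time_R (fun t => weighted_sum I u k + weighted_sum I c k * t - SI w t))
  /\
  (forall t : R, 0 < t ->
     Prob (fun w => Eltr (ruin_time (Ychain I u c k (SI w) 0)) t) =
     (fun (t0 uu cc : R) =>
        Prob (fun w => Eltr (ruin_time_R (fun s => uu + cc * s - SI w s)) t0))
       t (weighted_sum I u k) (weighted_sum I c k)).
Proof.
  assert (H1 : forall w : Omega,
     ruin_time (Ychain I u c k (SI w) 0) =
     ruin_time_R (fun t => weighted_sum I u k + weighted_sum I c k * t - SI w t)).
  { intro w. unfold ruin_time, ruin_time_R.
    apply (Einf_eq (fun t => 0 <= t /\ Eneg_strict (Ychain I u c k (SI w) 0 t))
                   (fun t => 0 <= t /\ Eneg_strict (Fin (weighted_sum I u k + weighted_sum I c k * t - SI w t)))).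
    eapply Equiv_trans; [| eapply Equiv_trans;
      [exact (chain_equiv I u c k Hu Hc Hk (SI w) I 0 ltac:(lia) 0 0 (Rle_refl 0) (Rle_refl 0))|]].
    - apply Equiv_ext. intro t. unfold Eneg_strict.
      replace (- (0 + 0 * t)) with 0 by ring. tauto.
    - apply Equiv_ext. intro t. unfold Eneg_strict. simpl Eltr.
      unfold T, weighted_sum. rewrite !sum_psum. unfold P. cbn [psum].
      unfold Rdiv at 1 3. rewrite !Rmult_0_l.
      split; intros [h1 h2]; split; auto; lra. }
  split; [exact H1|].
  intros t _. cbv beta. f_equal. apply functional_extensionality. intro w.
  rewrite H1. reflexivity.
Qed.
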